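(* Let $T,\widehat T\in\mathbb R^{d\times k}$ with $T$ of full column rank. Let $q,p,\widehat q,\widehat p\in\mathbb R^d$ and let $\theta\in\mathbb R^k$ satisfy $T\theta=q-p$ and $\|\theta\|\le\theta_{\max}$. Let $\Delta_T,\Delta_p,\Delta_q\ge0$ satisfy $\|\widehat T-T\|\le\Delta_T$, $\|\widehat p-p\|\le\Delta_p$, $\|\widehat q-q\|\le\Delta_q$. If $\widehat\theta$ is any minimizer over $\theta'\in\mathbb R^k$ of $$\|\widehat T\theta'-\widehat q+\widehat p\|+\Delta_T\|\theta'\|,$$ then $$\|\widehat\theta-\theta\|\le 2\|T^\dagger\|\big(\Delta_q+\Delta_p+\theta_{\max}\Delta_T\big).$$
   Context: Vector norms are Euclidean norms and matrix norms are spectral (operator) norms. $T^\dagger$ denotes the Moore–Penrose pseudoinverse; for full-column-rank $T$, $\|T^\dagger\|$ is the inverse of the smallest singular value of $T$. *)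

(* Defs.v *)
From HB Require Import structures.
From mathcomp Require Import all_boot all_order all_algebra.
From mathcomp Require Import classical_sets reals.
Set Implicit Arguments. Unset Strict Implicit. Unset Printing Implicit Defensive.
Import Order.TTheory GRing.Theory Num.Theory.
Local Open Scope ring_scope.
Local Open Scope classical_set_scope.

Definition vnorm (R : realType) (n : nat) (x : 'cV[R]_n) : R :=
  Num.sqrt (\sum_(i < n) x i ord0 ^+ 2).

Definition opnorm (R : realType) (m n : nat) (A : 'M[R]_(m, n)) : R :=
  sup [set vnorm (A *m x) | x in [set x : 'cV[R]_n | vnorm x <= 1]].

(* Moore-Penrose pseudoinverse of a full-column-rank matrix:
   T^dagger = (T^T T)^{-1} T^T  (valid when \rank T = n). *)
Definition pinv_fullcol (R : realType) (m n : nat) (A : 'M[R]_(m, n))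
  : 'M[R]_(n, m) := invmx (A^T *m A) *m A^T.

(* Main.v *)
Require Import Defs.
From HB Require Import structures.
From mathcomp Require Import all_boot all_order all_algebra.
From mathcomp Require Import classical_sets reals.
From mathcomp Require Import ring lra.
Import Order.TTheory GRing.Theory Num.Theory.
Set Implicit Arguments. Unset Strict Implicit.
Local Open Scope ring_scope.

Section S.
Variable R : realType.
Lemma cs n (f g : 'I_n -> R) :
  (\sum_i f i * g i) ^+ 2 <= (\sum_i f i ^+ 2) * (\sum_i g i ^+ 2).
Proof.
have H : 0 <= \sum_i \sum_j (f i * g j - f j * g i) ^+ 2.
  by apply: sumr_ge0 => i _; apply: sumr_ge0 => j _; exact: sqr_ge0.
have E : (\sum_i \sum_j f i ^+ 2 * g j ^+ 2) + (\sum_i \sum_j f j ^+ 2 * g i ^+ 2)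
   - 2 * \sum_i \sum_j (f i * g i) * (f j * g j) = 
   \sum_i \sum_j (f i * g j - f j * g i) ^+ 2.
  rewrite mulr_sumr -big_split -sumrB /=; apply: eq_bigr => i _.
  rewrite mulr_sumr -big_split -sumrB /=; apply: eq_bigr => j _.
  ring.
move: H; rewrite -E (exchange_big _ _ _ _ _ (fun i j => f j ^+ 2 * g i ^+ 2)) /=.
have E1 : \sum_i \sum_j f i ^+ 2 * g j ^+ 2 = (\sum_i f i ^+ 2) * (\sum_i g i ^+ 2).
  by rewrite mulr_suml; apply: eq_bigr => i _; rewrite mulr_sumr.
have E2 : \sum_i \sum_j (f i * g i) * (f j * g j) = (\sum_i f i * g i) ^+ 2.
  by rewrite expr2 mulr_suml; apply: eq_bigr => i _; rewrite mulr_sumr.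
rewrite E1 E2 => H; lra.
Qed.

Lemma sq_le (a b : R) : 0 <= b -> a ^+ 2 <= b ^+ 2 -> a <= b.
Proof. move=> hb h; nra. Qed.

Lemma vnorm_ge0 n (x : 'cV[R]_n) : 0 <= vnorm x.
Proof. exact: sqrtr_ge0. Qed.

Lemma vnorm_sq n (x : 'cV[R]_n) : vnorm x ^+ 2 = \sum_i x i ord0 ^+ 2.
Proof. by rewrite sqr_sqrtr //; apply: sumr_ge0 => i _; exact: sqr_ge0. Qed.

Lemma vnormD n (x y : 'cV[R]_n) : vnorm (x + y) <= vnorm x + vnorm y.
Proof.
apply: sq_le; first by rewrite addr_ge0 // vnorm_ge0.
have hc := cs (fun i => x i ord0) (fun i => y i ord0).
rewrite -!vnorm_sq in hc.
have hxy : \sum_i x i ord0 * y i ord0 <= vnorm x * vnorm y.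
  apply: sq_le; first by rewrite mulr_ge0 // vnorm_ge0.
  by rewrite exprMn.
have -> : vnorm (x + y) ^+ 2 =
   vnorm x ^+ 2 + 2 * \sum_i x i ord0 * y i ord0 + vnorm y ^+ 2.
  rewrite !vnorm_sq mulr_sumr -!big_split /=; apply: eq_bigr => i _.
  rewrite mxE; ring.
lra.
Qed.

Lemma vnormZ n (a : R) (x : 'cV[R]_n) : vnorm (a *: x) = `|a| * vnorm x.
Proof.
rewrite /vnorm -sqrtr_sqr -sqrtrM ?sqr_ge0 // mulr_sumr.
by congr Num.sqrt; apply: eq_bigr => i _; rewrite mxE; ring.
Qed.

Lemma vnormN n (x : 'cV[R]_n) : vnorm (- x) = vnorm x.
Proof. by rewrite -scaleN1r vnormZ normrN normr1 mul1r. Qed.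

Lemma vnormB n (x y : 'cV[R]_n) : vnorm (x - y) <= vnorm x + vnorm y.
Proof. by rewrite -(vnormN y) vnormD. Qed.

Lemma vnorm_eq0 n (x : 'cV[R]_n) : vnorm x = 0 -> x = 0.
Proof.
move=> /eqP; rewrite sqrtr_eq0 => h.
have h0 : \sum_i x i ord0 ^+ 2 = 0.
  by apply/eqP; rewrite eq_le h sumr_ge0 // => i _; exact: sqr_ge0.
apply/matrixP => i j; rewrite (ord1 j) mxE.
apply/eqP; rewrite -sqrf_eq0; apply/eqP.
exact: (psumr_eq0P (fun i _ => sqr_ge0 (x i ord0)) h0).
Qed.

Lemma mx_bound m n (A : 'M[R]_(m, n)) (x : 'cV[R]_n) :
  vnorm (A *m x) <= Num.sqrt (\sum_i \sum_j A i j ^+ 2) * vnorm x.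
Proof.
apply: sq_le; first by rewrite mulr_ge0 ?sqrtr_ge0 ?vnorm_ge0.
have hs : Num.sqrt (\sum_i \sum_j A i j ^+ 2) ^+ 2 = \sum_i \sum_j A i j ^+ 2.
  by rewrite sqr_sqrtr //; apply: sumr_ge0 => i _; apply: sumr_ge0 => j _; exact: sqr_ge0.
rewrite exprMn hs.
rewrite vnorm_sq vnorm_sq mulr_suml; apply: ler_sum => i _.
rewrite mxE; exact: (cs (fun j => A i j) (fun j => x j ord0)).
Qed.

Lemma opnorm_set_ub m n (A : 'M[R]_(m, n)) :
  has_ubound [set vnorm (A *m x) | x in [set x : 'cV[R]_n | vnorm x <= 1]].
Proof.
exists (Num.sqrt (\sum_i \sum_j A i j ^+ 2)) => _ [x hx <-].
apply: le_trans (mx_bound A x) _.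
by rewrite ler_piMr ?sqrtr_ge0.
Qed.

Lemma opnorm_ge0 m n (A : 'M[R]_(m, n)) : 0 <= opnorm A.
Proof.
have := ub_le_sup (opnorm_set_ub A); apply.
exists 0; last by rewrite mulmx0 /vnorm big1 ?sqrtr0 // => i _; rewrite mxE expr0n.
by rewrite /= /vnorm big1 ?sqrtr0 // => i _; rewrite mxE expr0n.
Qed.

Lemma opnorm_le m n (A : 'M[R]_(m, n)) (x : 'cV[R]_n) :
  vnorm (A *m x) <= opnorm A * vnorm x.
Proof.
have [h0|hn] := eqVneq (vnorm x) 0.
  by rewrite h0 mulr0 (vnorm_eq0 h0) mulmx0 /vnorm big1 ?sqrtr0 // => i _; rewrite mxE expr0n.
have hp : 0 < vnorm x by rewrite lt_def hn vnorm_ge0.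
have hy : vnorm ((vnorm x)^-1 *: x) <= 1.
  by rewrite vnormZ ger0_norm ?invr_ge0 ?vnorm_ge0 // mulVf.
have := ub_le_sup (opnorm_set_ub A) (ex_intro2 _ _ ((vnorm x)^-1 *: x) hy erefl).
rewrite -scalemxAr !vnormZ ger0_norm ?invr_ge0 ?vnorm_ge0 // => h.
rewrite -ler_pdivrMr // mulrC; exact: h.
Qed.
End S.
Lemma rv_self0 (R : realType) d (w : 'rV[R]_d) : w *m w^T = 0 -> w = 0.
Proof.
move=> hw.
have := congr1 (fun M : 'M[R]_1 => M ord0 ord0) hw; rewrite !mxE => h.
have h2 : \sum_j w ord0 j ^+ 2 = 0.
  by apply: etrans h; apply: eq_bigr => j _; rewrite mxE expr2.
apply/rowP => j; rewrite mxE.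
apply/eqP; rewrite -sqrf_eq0; apply/eqP.
exact: (psumr_eq0P (fun j _ => sqr_ge0 (w ord0 j)) h2).
Qed.

Lemma pinvK (R : realType) d k (T : 'M[R]_(d,k)) : \rank T = k -> pinv_fullcol T *m T = 1%:M.
Proof.
move=> hr; rewrite /pinv_fullcol -mulmxA mulVmx // -row_free_unit.
apply: inj_row_free => v hv.
have w0 : v *m T^T = 0.
  apply: rv_self0.
  by rewrite trmx_mul trmxK mulmxA -(mulmxA v) hv mul0mx.
have rf : row_free T^T by rewrite /row_free mxrank_tr hr.
by apply/eqP; rewrite -(mulmx_free_eq0 _ rf) w0.
Qed.

Theorem lemma3 (R : realType) (d k : nat)
  (T That : 'M[R]_(d, k)) (q p qh ph : 'cV[R]_d) (theta : 'cV[R]_k)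
  (theta_max DT Dp Dq : R) (thetah : 'cV[R]_k) :
  \rank T = k ->
  T *m theta = q - p ->
  vnorm theta <= theta_max ->
  0 <= DT -> 0 <= Dp -> 0 <= Dq ->
  opnorm (That - T) <= DT ->
  vnorm (ph - p) <= Dp ->
  vnorm (qh - q) <= Dq ->
  (forall theta' : 'cV[R]_k,
     vnorm (That *m thetah - qh + ph) + DT * vnorm thetah
     <= vnorm (That *m theta' - qh + ph) + DT * vnorm theta') ->
  vnorm (thetah - theta)
  <= 2 * opnorm (pinv_fullcol T) * (Dq + Dp + theta_max * DT).
Proof.
move=> hr hT hth hDT hDp hDq hop hp hq hmin.
have ee : thetah - theta = pinv_fullcol T *m (T *m (thetah - theta)).
  by rewrite mulmxA pinvK // mul1mx.
have hTe : T *m (thetah - theta) =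
  (That *m thetah - qh + ph) - (That - T) *m thetah + (qh - q) - (ph - p).
  rewrite mulmxBr hT mulmxBl; move: (That *m thetah) (T *m thetah) => a b.
  apply/matrixP => i j; rewrite !mxE; ring.
have hr0 : That *m theta - qh + ph = (That - T) *m theta - (qh - q) + (ph - p).
  rewrite mulmxBl hT; move: (That *m theta) => a.
  apply/matrixP => i j; rewrite !mxE; ring.
have h1 : vnorm (T *m (thetah - theta)) <=
   vnorm (That *m thetah - qh + ph) + vnorm ((That - T) *m thetah) + Dq + Dp.
  rewrite hTe.
  apply: le_trans (vnormB _ _) _; apply: lerD => //.
  apply: le_trans (vnormD _ _) _; apply: lerD => //.
  exact: vnormB.
have h2 : vnorm ((That - T) *m thetah) <= DT * vnorm thetah.
  apply: le_trans (opnorm_le _ _) _; apply: ler_wpM2r => //; exact: vnorm_ge0.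
have h3 : vnorm (That *m theta - qh + ph) <= DT * vnorm theta + Dq + Dp.
  rewrite hr0.
  apply: le_trans (vnormD _ _) _; apply: lerD => //.
  apply: le_trans (vnormB _ _) _; apply: lerD => //.
  apply: le_trans (opnorm_le _ _) _; apply: ler_wpM2r => //; exact: vnorm_ge0.
have h4 := hmin theta.
have h5 : DT * vnorm theta <= DT * theta_max by apply: ler_wpM2l.
have h6 : vnorm (T *m (thetah - theta)) <= 2 * (Dq + Dp + theta_max * DT).
  lra.
rewrite ee; apply: le_trans (opnorm_le _ _) _.
have h7 := opnorm_ge0 (pinv_fullcol T).
have -> : 2 * opnorm (pinv_fullcol T) * (Dq + Dp + theta_max * DT) =
  opnorm (pinv_fullcol T) * (2 * (Dq + Dp + theta_max * DT)) by ring.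
exact: ler_wpM2l.
Qed.
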